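(* Let $A \subseteq \mathbb{N}$ be a normal set. Then there exist $x,y,z \in A$ with $x \neq y$ such that $xy = z^2$.
   Context: $\mathbb{N} = \{1,2,3,\dots\}$. An infinite binary sequence $(\lambda_i)_{i \ge 1}$ is called normal if every finite binary word $\omega$ of length $|\omega|$ occurs in the sequence with asymptotic frequency $2^{-|\omega|}$, i.e. the number of $i \le N$ with $(\lambda_i,\dots,\lambda_{i+|\omega|-1}) = \omega$, divided by $N$, tends to $2^{-|\omega|}$ as $N \to \infty$. A set $B \subseteq \mathbb{N}$ is called normal if its indicator sequence ($\lambda_i = 1$ iff $i \in B$) is normal. *)

(* Defs.v *)
From Stdlib Require Import Reals Lra Lia Arith List.
Open Scope R_scope.

(* A subset of N = {1,2,3,...} is represented by its indicator
   A : nat -> bool; only the values at i >= 1 matter. *)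

Fixpoint occurs_at (lam : nat -> bool) (i : nat) (w : list bool) : bool :=
  match w with
  | nil => true
  | b :: w' => Bool.eqb (lam i) b && occurs_at lam (S i) w'
  end.

(* number of i with 1 <= i <= N such that w occurs at position i *)
Fixpoint occ_count (lam : nat -> bool) (w : list bool) (N : nat) : nat :=
  match N with
  | O => O
  | S N' => occ_count lam w N' + (if occurs_at lam N w then 1 else 0)
  end.

Definition normal_seq (lam : nat -> bool) : Prop :=
  forall w : list bool,
    Un_cv (fun N => INR (occ_count lam w N) / INR N) ((/ 2) ^ length w).

Definition normal_set (A : nat -> bool) : Prop := normal_seq A.

(* Main.v *)
Require Import Defs.
From Stdlib Require Import Reals Arith List Lra Lia Bool Classical.
Open Scope R_scope.

Fixpoint rsum (f : nat -> R) (n : nat) : R :=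
  match n with O => 0 | S n => rsum f n + f n end.

Lemma rsum_ext f g n : (forall k, (k < n)%nat -> f k = g k) -> rsum f n = rsum g n.
Proof. induction n; simpl; intros H; auto. rewrite IHn by (intros; apply H; lia). rewrite H by lia; auto. Qed.

Lemma rsum_le f g n : (forall k, (k < n)%nat -> f k <= g k) -> rsum f n <= rsum g n.
Proof. induction n; simpl; intros H. lra. assert (rsum f n <= rsum g n) by (apply IHn; intros; apply H; lia).
 assert (f n <= g n) by (apply H; lia). lra. Qed.

Lemma rsum_nonneg f n : (forall k, (k < n)%nat -> 0 <= f k) -> 0 <= rsum f n.
Proof. intros H. replace 0 with (rsum (fun _ => 0) n). apply rsum_le; auto.
 induction n; simpl; auto. rewrite IHn; [lra|]. intros; apply H; lia. Qed.

Lemma rsum_plus f g n : rsum (fun k => f k + g k) n = rsum f n + rsum g n.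
Proof. induction n; simpl; [lra|]. rewrite IHn; lra. Qed.

Lemma rsum_scal c f n : rsum (fun k => c * f k) n = c * rsum f n.
Proof. induction n; simpl; [lra|]. rewrite IHn; lra. Qed.

Lemma rsum_const c n : rsum (fun _ => c) n = INR n * c.
Proof. induction n; [simpl; lra|]. cbn [rsum]. rewrite IHn, (S_INR n); lra. Qed.

Lemma rsum_split f a b : rsum f (a + b) = rsum f a + rsum (fun r => f (a + r)%nat) b.
Proof. induction b; simpl. rewrite Nat.add_0_r; lra. rewrite Nat.add_succ_r; simpl; rewrite IHb; lra. Qed.

Lemma rsum_swap (f : nat -> nat -> R) D L :
  rsum (fun d => rsum (fun i => f d i) L) D = rsum (fun i => rsum (fun d => f d i) D) L.
Proof. induction D; simpl. induction L; simpl; lra. rewrite IHD, <- rsum_plus. auto. Qed.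

Lemma rsum_mono f n m : (forall k, 0 <= f k) -> (n <= m)%nat -> rsum f n <= rsum f m.
Proof. intros H Hnm. replace m with (n + (m - n))%nat by lia. rewrite rsum_split.
 assert (0 <= rsum (fun r => f (n + r)%nat) (m - n)) by (apply rsum_nonneg; auto). lra. Qed.

Lemma rsum_shift f L : rsum f (S L) = f O + rsum (fun i => f (S i)) L.
Proof. induction L; simpl in *. lra. rewrite IHL. lra. Qed.

Definition b01 (b : bool) : R := if b then 1 else 0.
Lemma b01_nonneg b : 0 <= b01 b. Proof. destruct b; simpl; lra. Qed.
Lemma b01_le1 b : b01 b <= 1. Proof. destruct b; simpl; lra. Qed.

Fixpoint allwords (n : nat) : list (list bool) :=
  match n with O => nil :: nil
  | S n => map (cons true) (allwords n) ++ map (cons false) (allwords n) end.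

Fixpoint lsum (f : list bool -> R) (l : list (list bool)) : R :=
  match l with nil => 0 | w :: l => f w + lsum f l end.

Lemma lsum_app f l1 l2 : lsum f (l1 ++ l2) = lsum f l1 + lsum f l2.
Proof. induction l1; simpl; [lra|]. rewrite IHl1; lra. Qed.
Lemma lsum_map f h l : lsum f (map h l) = lsum (fun w => f (h w)) l.
Proof. induction l; simpl; auto. rewrite IHl; auto. Qed.
Lemma lsum_plus f g l : lsum (fun w => f w + g w) l = lsum f l + lsum g l.
Proof. induction l; simpl; [lra|]. rewrite IHl; lra. Qed.
Lemma lsum_scal c f l : lsum (fun w => c * f w) l = c * lsum f l.
Proof. induction l; simpl; [lra|]. rewrite IHl; lra. Qed.
Lemma lsum_ext f g l : (forall w, In w l -> f w = g w) -> lsum f l = lsum g l.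
Proof. induction l; simpl; intros H; auto. rewrite H, IHl; auto. Qed.
Lemma lsum_zero l : lsum (fun _ => 0) l = 0.
Proof. induction l; simpl; auto. rewrite IHl; lra. Qed.
Lemma lsum_const c l : lsum (fun _ => c) l = INR (length l) * c.
Proof. induction l; [simpl; lra|]. cbn [lsum length]. rewrite IHl, (S_INR (length l)); lra. Qed.

Lemma allwords_length n w : In w (allwords n) -> length w = n.
Proof. revert w; induction n; simpl; intros w H.
 destruct H as [<-|[]]; auto.
 apply in_app_or in H; destruct H as [H|H]; apply in_map_iff in H; destruct H as [u [<- Hu]]; simpl; f_equal; auto. Qed.

Lemma allwords_card n : INR (length (allwords n)) = 2 ^ n.
Proof. induction n; simpl. lra. rewrite length_app, !length_map, plus_INR, IHn. lra. Qed.

Fixpoint window (A : nat -> bool) (t n : nat) : list bool :=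
  match n with O => nil | S n => A t :: window A (S t) n end.

Lemma occ_sum A M : forall t g,
  lsum (fun w => b01 (occurs_at A t w) * g w) (allwords M) = g (window A t M).
Proof. induction M; intros t g; simpl. lra.
 rewrite lsum_app, !lsum_map. simpl occurs_at.
 destruct (A t); simpl.
 - rewrite (IHM (S t) (fun w => g (true :: w))).
   rewrite (lsum_ext _ (fun _ => 0)). rewrite lsum_zero; lra. intros; simpl; lra.
 - rewrite (IHM (S t) (fun w => g (false :: w))).
   rewrite (lsum_ext _ (fun _ => 0)). rewrite lsum_zero; lra. intros; simpl; lra.
Qed.

Lemma occ_count_sum A M g N :
  lsum (fun w => INR (occ_count A w N) * g w) (allwords M) = rsum (fun t => g (window A (S t) M)) N.
Proof. induction N; simpl.
 - rewrite (lsum_ext _ (fun _ => 0)). apply lsum_zero. intros; simpl; lra.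
 - rewrite <- IHN, <- (occ_sum A M (S N) g), <- lsum_plus. apply lsum_ext; intros w _.
   rewrite plus_INR. unfold b01. destruct (occurs_at A (S N) w); simpl; lra.
Qed.

Lemma cv_const c : Un_cv (fun _ => c) c.
Proof. intros e He. exists O. intros. unfold R_dist. rewrite Rminus_diag, Rabs_R0; auto. Qed.

Lemma lsum_cv A M g l : normal_seq A -> (forall w, In w l -> length w = M) ->
  Un_cv (fun N => lsum (fun w => INR (occ_count A w N) / INR N * g w) l)
        (lsum (fun w => (/2)^M * g w) l).
Proof. intros HA; induction l; simpl; intros H.
 - apply cv_const.
 - apply CV_plus; [|apply IHl; auto].
   apply CV_mult; [|apply cv_const]. rewrite <- (H a) by auto. apply HA.
Qed.

Fixpoint smask (m w : list bool) : nat :=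
  match m, w with c :: m', b :: w' => ((if c && b then 1 else 0) + smask m' w')%nat | _, _ => O end.
Fixpoint cnt (m : list bool) : nat :=
  match m with nil => O | c :: m' => ((if c then 1 else 0) + cnt m')%nat end.

Lemma var_identity m :
  lsum (fun w => (2 * INR (smask m w) - INR (cnt m))^2) (allwords (length m)) = INR (cnt m) * 2 ^ length m.
Proof. induction m as [|c m IH]; simpl. lra.
 rewrite lsum_app, !lsum_map, <- lsum_plus.
 destruct c; cbn [smask cnt andb].
 - rewrite (lsum_ext _ (fun w => 2 + 2 * (2 * INR (smask m w) - INR (cnt m))^2)).
   2:{ intros w _. rewrite !plus_INR. simpl INR. ring. }
   rewrite lsum_plus, lsum_const, lsum_scal, IH, allwords_card. rewrite plus_INR. simpl INR. simpl length. simpl pow. ring.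
 - rewrite (lsum_ext _ (fun w => 2 * (2 * INR (smask m w) - INR (cnt m))^2)).
   2:{ intros w _. rewrite !plus_INR. simpl INR. ring. }
   rewrite lsum_scal, IH. rewrite plus_INR. simpl INR. simpl length. simpl pow. ring.
Qed.

Fixpoint mk_mask (q' l : nat) : list bool :=
  match l with O => nil | S l => (true :: repeat false q') ++ mk_mask q' l end.

Lemma mk_mask_length q' l : length (mk_mask q' l) = (l * S q')%nat.
Proof. induction l; simpl; auto. rewrite length_app, repeat_length, IHl. simpl. lia. Qed.

Lemma mk_mask_cnt q' l : cnt (mk_mask q' l) = l.
Proof. induction l; simpl; auto. assert (forall k m, cnt (repeat false k ++ m) = cnt m).
 { induction k; simpl; auto. } rewrite H, IHl. auto. Qed.

Fixpoint sA (A : nat -> bool) (q t l : nat) : nat :=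
  match l with O => O | S l => ((if A t then 1 else 0) + sA A q (t + q) l)%nat end.

Lemma window_app A t a b : window A t (a + b) = window A t a ++ window A (t + a) b.
Proof. revert t; induction a; intros t; simpl. rewrite Nat.add_0_r; auto.
 rewrite IHa. do 3 f_equal. lia. Qed.

Lemma window_length A t n : length (window A t n) = n.
Proof. revert t; induction n; simpl; auto. Qed.

Lemma smask_app x m u v : length x = length u -> smask (x ++ m) (u ++ v) = (smask x u + smask m v)%nat.
Proof. revert u; induction x; intros [|b u] H; simpl in *; try lia. auto.
 rewrite IHx by lia. lia. Qed.

Lemma smask_false k u : smask (repeat false k) u = O.
Proof. revert u; induction k; intros [|b u]; simpl; auto. Qed.

Lemma smask_window A q' l t :
  smask (mk_mask q' l) (window A t (l * S q')) = sA A (S q') t l.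
Proof. revert t; induction l; intros t; simpl; auto.
 change (S (q' + l * S q')) with (S q' + l * S q')%nat.
 rewrite window_app.
 change (true :: repeat false q' ++ mk_mask q' l) with ((true :: repeat false q') ++ mk_mask q' l).
 rewrite smask_app by (simpl; rewrite repeat_length, window_length; auto).
 rewrite IHl. simpl. rewrite smask_false. rewrite Nat.add_succ_r. reflexivity.
Qed.

Lemma sA_rsum A q t l : INR (sA A q t l) = rsum (fun i => b01 (A (t + i * q)%nat)) l.
Proof. revert t; induction l; intros t; simpl sA. simpl; auto.
 rewrite rsum_shift, plus_INR, IHl. simpl. rewrite Nat.add_0_r.
 f_equal. destruct (A t); simpl; auto. apply rsum_ext; intros. do 2 f_equal. lia. Qed.

Definition Cq (A : nat -> bool) (q n : nat) : R := rsum (fun e => b01 (A (q * S e)%nat)) n.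

Lemma sub_sample (F : nat -> R) q' D : (forall k, 0 <= F k) ->
  rsum (fun d => F (S q' * d + q')%nat) D <= rsum F (S q' * D).
Proof. intros HF; induction D. rewrite Nat.mul_0_r; simpl; lra.
 cbn [rsum].
 replace (S q' * S D)%nat with (S q' * D + S q')%nat by ring.
 rewrite rsum_split.
 assert (Hl : rsum (fun r => F (S q' * D + r)%nat) (S q') >= F (S q' * D + q')%nat).
 { cbn [rsum]. assert (0 <= rsum (fun r => F (S q' * D + r)%nat) q') by (apply rsum_nonneg; auto). lra. }
 lra.
Qed.

Lemma dens (A : nat -> bool) (HA : normal_seq A) (q' : nat) :
  exists D0, forall D, (D0 <= D)%nat -> (11/25) * INR D <= Cq A (S q') (D + 100 * S q').
Proof.
  set (q := S q'). set (L := (100 * q)%nat).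
  set (mask := mk_mask q' L). set (M := length mask).
  set (g := fun w => (2 * INR (smask mask w) - INR L)^2).
  assert (HM : M = (L * q)%nat) by (unfold M, mask; rewrite mk_mask_length; auto).
  assert (Hcv : Un_cv (fun N => rsum (fun t => g (window A (S t) M)) N / INR N) (INR L)).
  { eapply Un_cv_ext with (fun N => lsum (fun w => INR (occ_count A w N) / INR N * g w) (allwords M)).
    { intros N. rewrite <- occ_count_sum. unfold Rdiv. rewrite Rmult_comm, <- lsum_scal.
      apply lsum_ext; intros; ring. }
    replace (INR L) with (lsum (fun w => (/2)^M * g w) (allwords M)).
    - apply lsum_cv; auto. intros; eapply allwords_length; eauto.
    - rewrite lsum_scal. unfold g, M. assert (Hc : cnt mask = L) by apply mk_mask_cnt.
      rewrite (lsum_ext _ (fun w => (2*INR(smask mask w) - INR (cnt mask))^2)) by (intros; rewrite Hc; auto).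
      rewrite var_identity, Hc. rewrite <- Rmult_assoc, (Rmult_comm _ (INR L)), Rmult_assoc.
      rewrite <- Rpow_mult_distr. replace (/2 * 2) with 1 by lra. rewrite pow1. ring. }
  destruct (Hcv 1 Rlt_0_1) as [N0 HN0].
  exists (S N0). intros D HD.
  assert (Hq1 : 1 <= INR q) by (unfold q; rewrite S_INR; pose proof (pos_INR q'); lra).
  assert (HD1 : 1 <= INR D) by (apply (le_INR 1); lia).
  assert (Hbig : rsum (fun t => g (window A (S t) M)) (q * D) <= (INR L + 1) * INR (q * D)).
  { assert (HqD : (q * D >= N0)%nat) by (unfold q; lia).
    specialize (HN0 _ HqD). unfold R_dist in HN0. apply Rabs_def2 in HN0. destruct HN0 as [H1 H2].
    assert (Hpos : 0 < INR (q * D)) by (apply lt_0_INR; unfold q; lia).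
    set (X := rsum (fun t => g (window A (S t) M)) (q * D)) in *.
    assert (X / INR (q * D) < INR L + 1) by lra.
    apply Rlt_le. apply (Rmult_lt_compat_r (INR (q * D))) in H; auto.
    unfold Rdiv in H. rewrite Rmult_assoc, Rinv_l in H by lra. lra. }
  assert (Hsub : rsum (fun d => g (window A (q * S d) M)) D <= rsum (fun t => g (window A (S t) M)) (q * D)).
  { eapply Rle_trans; [|apply (sub_sample (fun t => g (window A (S t) M)) q' D)].
    - right. apply rsum_ext; intros. do 3 f_equal. unfold q. lia.
    - intros; unfold g; apply pow2_ge_0. }
  set (s := fun d => INR (sA A q (q * S d) L)).
  assert (Hg : forall d, g (window A (q * S d) M) = (2 * s d - INR L)^2).
  { intros d. unfold g, s. f_equal. f_equal. f_equal. f_equal. rewrite HM. unfold mask, q. apply smask_window. }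
  set (c := 10 * INR q).
  assert (Hc : 0 < c) by (unfold c; lra).
  assert (Hterm : forall d, INR L - 2 * s d <= (2 * s d - INR L)^2 / (2 * c) + c / 2).
  { intros d. assert (0 <= (2 * s d - INR L + c)^2 / (2 * c)).
    { apply Rmult_le_pos. apply pow2_ge_0. left; apply Rinv_0_lt_compat; lra. }
    replace ((2 * s d - INR L)^2 / (2 * c) + c / 2) with ((2 * s d - INR L + c)^2 / (2 * c) + (INR L - 2 * s d)).
    lra. field. lra. }
  assert (Hsum1 : INR D * INR L - 2 * rsum s D <= (INR L + 1) * INR (q * D) / (2 * c) + INR D * (c / 2)).
  { assert (rsum (fun d => INR L - 2 * s d) D <= rsum (fun d => (2 * s d - INR L)^2 / (2 * c) + c / 2) D).
    { apply rsum_le; intros; apply Hterm. }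
    rewrite rsum_plus, rsum_const in H.
    replace (rsum (fun d => INR L - 2 * s d) D) with (INR D * INR L - 2 * rsum s D) in H.
    2:{ rewrite (rsum_ext (fun d => INR L - 2 * s d) (fun d => INR L + (-2) * s d)) by (intros; ring).
        rewrite rsum_plus, rsum_const, rsum_scal. ring. }
    replace (rsum (fun d => (2 * s d - INR L) ^ 2 / (2 * c)) D) with (/ (2 * c) * rsum (fun d => (2 * s d - INR L) ^ 2) D) in H.
    2:{ rewrite <- rsum_scal. apply rsum_ext; intros; unfold Rdiv; ring. }
    rewrite (rsum_ext (fun d => (2 * s d - INR L)^2) (fun d => g (window A (q * S d) M))) in H by (intros; rewrite Hg; auto).
    assert (/ (2 * c) * rsum (fun d => g (window A (q * S d) M)) D <= / (2 * c) * ((INR L + 1) * INR (q * D))).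
    { apply Rmult_le_compat_l. left; apply Rinv_0_lt_compat; lra. lra. }
    unfold Rdiv. lra. }
  assert (Hsum2 : rsum s D <= INR L * Cq A q (D + L)).
  { unfold s. rewrite (rsum_ext _ (fun d => rsum (fun i => b01 (A (q * S (d + i))%nat)) L)).
    2:{ intros d _. rewrite sA_rsum. apply rsum_ext; intros. do 2 f_equal. lia. }
    rewrite rsum_swap. rewrite <- rsum_const. apply rsum_le. intros i Hi.
    unfold Cq. eapply Rle_trans; [|apply (rsum_mono _ (i + D))].
    - rewrite rsum_split. assert (0 <= rsum (fun e => b01 (A (q * S e)%nat)) i) by (apply rsum_nonneg; intros; apply b01_nonneg).
      rewrite (rsum_ext (fun d => b01 (A (q * S (d + i))%nat)) (fun r => b01 (A (q * S (i + r))%nat))) by (intros; do 4 f_equal; lia). lra.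
    - intros; apply b01_nonneg.
    - lia. }
  assert (HLq : INR L = 100 * INR q) by (unfold L; rewrite mult_INR; simpl; lra).
  assert (HqDr : INR (q * D) = INR q * INR D) by apply mult_INR.
  rewrite HqDr, HLq in Hsum1. rewrite HLq in Hsum2. unfold c in Hsum1.
  replace ((100 * INR q + 1) * (INR q * INR D) / (2 * (10 * INR q))) with ((100 * INR q + 1) * INR D / 20) in Hsum1 by (field; lra).
  fold q. fold L.
  set (X := Cq A q (D + L)) in *.
  assert (INR q * (200 * X - 88 * INR D) >= 0) by nra.
  nra.
Qed.

Fixpoint count_true (p : list bool) : nat :=
  match p with nil => O | b :: p => ((if b then 1 else 0) + count_true p)%nat end.

Definition ok_new (p : list bool) (n : nat) : bool :=
  forallb (fun j => if (n <=? 2 * j)%nat then negb (nth (2 * j - n) p false && nth j p false) else true) (seq 0 n).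

Fixpoint chk (r : nat) (p : list bool) : bool :=
  match r with
  | O => (count_true p <=? 8)%nat
  | S r' => (if ok_new p (length p) then chk r' (p ++ true :: nil) else true) && chk r' (p ++ false :: nil)
  end.

Lemma chk19 : chk 19 nil = true.
Proof. vm_compute. reflexivity. Qed.

Fixpoint cntb (b : nat -> bool) (n : nat) : nat :=
  match n with O => O | S n => (cntb b n + (if b n then 1 else 0))%nat end.

Definition apfree (b : nat -> bool) (n : nat) : Prop :=
  forall i j k, (i < j)%nat -> (j < k)%nat -> (k < n)%nat -> (i + k = 2 * j)%nat ->
    b i = true -> b j = true -> b k = true -> False.

Lemma count_true_app p x : count_true (p ++ x :: nil) = (count_true p + (if x then 1 else 0))%nat.
Proof. induction p; simpl; auto. rewrite IHp. lia. Qed.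

Lemma count_agree b p : (forall k, (k < length p)%nat -> nth k p false = b k) -> count_true p = cntb b (length p).
Proof. induction p as [|x p IH] using rev_ind; intros H; simpl; auto.
 rewrite count_true_app, length_app; simpl. rewrite Nat.add_1_r. simpl.
 rewrite IH. f_equal. specialize (H (length p)). rewrite app_nth2 in H by lia.
 rewrite Nat.sub_diag in H. simpl in H. rewrite <- H by (rewrite length_app; simpl; lia). auto.
 intros k Hk. rewrite <- H by (rewrite length_app; simpl; lia). rewrite app_nth1; auto.
Qed.

Lemma chk_sound r : forall p b, chk r p = true ->
  (forall k, (k < length p)%nat -> nth k p false = b k) ->
  apfree b (length p + r) -> (cntb b (length p + r) <= 8)%nat.
Proof. induction r; intros p b Hc Hag Hap.
 - simpl in Hc. apply Nat.leb_le in Hc. rewrite Nat.add_0_r, <- count_agree; auto.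
 - simpl in Hc. apply andb_true_iff in Hc. destruct Hc as [Ht Hf].
   replace (length p + S r)%nat with (length (p ++ b (length p) :: nil) + r)%nat by (rewrite length_app; simpl; lia).
   assert (Hag' : forall x, x = b (length p) -> forall k, (k < length (p ++ x :: nil))%nat -> nth k (p ++ x :: nil) false = b k).
   { intros x Hx k Hk. rewrite length_app in Hk; simpl in Hk.
     destruct (Nat.lt_ge_cases k (length p)).
     - rewrite app_nth1; auto.
     - assert (k = length p) by lia. subst. rewrite app_nth2 by lia. rewrite Nat.sub_diag. auto. }
   assert (Hap' : apfree b (length (p ++ b (length p) :: nil) + r)).
   { rewrite length_app; simpl. replace (length p + 1 + r)%nat with (length p + S r)%nat by lia. auto. }
   destruct (b (length p)) eqn:Eb.
   + assert (Hok : ok_new p (length p) = true).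
     { unfold ok_new. apply forallb_forall. intros j Hj. apply in_seq in Hj.
       destruct (length p <=? 2 * j)%nat eqn:E; auto. apply Nat.leb_le in E.
       apply negb_true_iff. destruct (nth (2 * j - length p) p false && nth j p false) eqn:E2; auto.
       apply andb_true_iff in E2. destruct E2 as [E3 E4].
       exfalso. apply (Hap (2 * j - length p) j (length p))%nat; try lia.
       all: try assumption. all: rewrite <- Hag by lia; assumption. }
     rewrite Hok in Ht. apply IHr; auto.
   + apply IHr; auto.
Qed.

Lemma ap19 b : apfree b 19 -> (cntb b 19 <= 8)%nat.
Proof. intros H. apply (chk_sound 19 nil b chk19); simpl; auto. intros; lia. Qed.

Lemma cntb_rsum b n : INR (cntb b n) = rsum (fun k => b01 (b k)) n.
Proof. induction n; simpl cntb; cbn [rsum]. auto. rewrite plus_INR, IHn. destruct (b n); simpl; auto. Qed.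

Lemma pow2_pos k : (1 <= 2 ^ k)%nat.
Proof. induction k; simpl; lia. Qed.

Lemma dens_all A (HA : normal_seq A) n : exists D0, forall k D, (k < n)%nat -> (D0 <= D)%nat ->
  (11/25) * INR D <= Cq A (2 ^ k) (D + 100 * 2 ^ k).
Proof. induction n.
 - exists O; intros; lia.
 - destruct IHn as [D1 H1].
   destruct (Nat.pow 2 n) eqn:E. pose proof (pow2_pos n); lia.
   destruct (dens A HA n0) as [D2 H2].
   exists (D1 + D2)%nat. intros k D Hk HD.
   destruct (Nat.eq_dec k n). subst. rewrite E. apply H2; lia. apply H1; lia.
Qed.

Lemma Cq_mono A q n m : (n <= m)%nat -> Cq A q n <= Cq A q m.
Proof. intros; unfold Cq; apply rsum_mono; auto. intros; apply b01_nonneg. Qed.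

Theorem mainTheorem5 (A : nat -> bool) :
  normal_set A ->
  exists x y z : nat,
    (1 <= x)%nat /\ (1 <= y)%nat /\ (1 <= z)%nat /\
    A x = true /\ A y = true /\ A z = true /\
    x <> y /\ (x * y = z * z)%nat.
Proof.
  intros HA. apply NNPP. intros Hno.
  assert (Hfree : forall d, (1 <= d)%nat -> apfree (fun k => A (2 ^ k * d)%nat) 19).
  { intros d Hd i j k Hij Hjk Hk Hap Hi Hj Hkk. apply Hno.
    exists (2 ^ i * d)%nat, (2 ^ k * d)%nat, (2 ^ j * d)%nat.
    pose proof (pow2_pos i); pose proof (pow2_pos j); pose proof (pow2_pos k).
    assert (Hlt : (2 ^ i < 2 ^ k)%nat) by (apply Nat.pow_lt_mono_r; lia).
    assert (Hsq : (2 ^ i * 2 ^ k = 2 ^ j * 2 ^ j)%nat) by (rewrite <- !Nat.pow_add_r; f_equal; lia).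
    repeat split; auto; try nia. }
  assert (Hle : forall E, rsum (fun e => rsum (fun k => b01 (A (2 ^ k * S e)%nat)) 19) E <= 8 * INR E).
  { intros E. rewrite Rmult_comm, <- rsum_const. apply rsum_le. intros e _.
    rewrite <- (cntb_rsum (fun k => A (2 ^ k * S e)%nat)).
    replace 8 with (INR 8) by (simpl; lra). apply le_INR. apply ap19. apply Hfree. lia. }
  destruct (dens_all A HA 19) as [D0 HD0].
  remember (2 ^ 19)%nat as T eqn:HT.
  remember (100 * T)%nat as P eqn:HPd.
  remember (D0 + 23 * P)%nat as D eqn:HDd.
  remember (D + P)%nat as E eqn:HEd.
  specialize (Hle E). rewrite rsum_swap in Hle.
  assert (Hlow : rsum (fun _ => (11/25) * INR D) 19 <= rsum (fun k => rsum (fun e => b01 (A (2 ^ k * S e)%nat)) E) 19).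
  { apply rsum_le. intros k Hk. eapply Rle_trans. apply (HD0 k D Hk). lia.
    change (rsum (fun e => b01 (A (2 ^ k * S e)%nat)) E) with (Cq A (2 ^ k) E).
    apply Cq_mono. assert (2 ^ k <= T)%nat by (rewrite HT; apply Nat.pow_le_mono_r; lia). lia. }
  rewrite rsum_const in Hlow.
  assert (HD : INR D >= 23 * INR P) by (rewrite HDd, plus_INR, mult_INR; pose proof (pos_INR D0); replace (INR 23) with 23 by (simpl; lra); lra).
  assert (HE : INR E = INR D + INR P) by (rewrite HEd; apply plus_INR).
  assert (HP : 0 < INR P) by (apply lt_0_INR; pose proof (pow2_pos 19); lia).
  replace (INR 19) with 19 in Hlow by (simpl; lra).
  rewrite HE in Hle. lra.
Qed.
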